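(* Let $F$ be the elementary cellular automaton with rule number 44. For every nonempty finite word $u\in\{0,1\}^*$, the deterministic communication complexity of $\textsc{SInv}_{F,u}$ restricted to inputs of length $n$ is bounded by a constant independent of $n$.
   Context: An elementary cellular automaton (ECA) with rule number $N\in\{0,\dots,255\}$ is the map $F:\{0,1\}^{\mathbb Z}\to\{0,1\}^{\mathbb Z}$ given by $F(x)_i=f(x_{i-1},x_i,x_{i+1})$. Here the local rule $f:\{0,1\}^3\to\{0,1\}$ is determined by $N=\sum_{a,b,c\in\{0,1\}}2^{4a+2b+c}f(a,b,c)$. For a nonempty finite word $u$, $p_u\in\{0,1\}^{\mathbb Z}$ is defined by $(p_u)_i=u_{i\bmod |u|}$. For a finite word $x$, $p_u[x]$ is the configuration equal to $x$ on positions $0,\dots,|x|-1$ and to $p_u$ elsewhere. $\textsc{SInv}_{F,u}$ is the decision problem: on input a finite word $x$, decide whether there is an integer $w$ such that for all $t\ge0$ the set of positions where $F^t(p_u)$ and $F^t(p_u[x])$ differ is contained in an interval of length $w$. For each $n$, it is regarded as a function $\{0,1\}^n\to\{0,1\}$. For a function $g:X\times Y\to Z$, $D(g)$ is the minimal depth of a deterministic two-party protocol computing $g$. In such a protocol, Alice knows $x$ and Bob knows $y$. The protocol is a binary tree: each internal node is labelled by a function of Alice's input only or of Bob's input only, with values in $\{\text{left},\text{right}\}$, and each leaf is labelled by an output value. For $g:\{0,1\}^m\to Z$, set $D(g)=\max_{0\le i<m}D(g_i)$, where $g_i:\{0,1\}^i\times\{0,1\}^{m-i}\to Z$ is $g_i(x,y)=g(xy)$.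 *)

(* Defs.v *)
From Stdlib Require Import ZArith.
From mathcomp Require Import all_boot.
Set Implicit Arguments. Unset Strict Implicit. Unset Printing Implicit Defensive.

Definition config := Z -> bool.

Definition local_rule (N : Z) (a b c : bool) : bool :=
  Z.testbit N (4 * Z.b2z a + 2 * Z.b2z b + Z.b2z c).

Definition eca (N : Z) (x : config) : config :=
  fun i => local_rule N (x (i - 1)%Z) (x i) (x (i + 1)%Z).

Definition periodic (u : seq bool) : config :=
  fun i => nth false u (Z.to_nat (Z.modulo i (Z.of_nat (size u)))).

Definition patch (u x : seq bool) : config :=
  fun i => if ((0 <=? i) && (i <? Z.of_nat (size x)))%Z
           then nth false x (Z.to_nat i) else periodic u i.

Definition SInv (N : Z) (u x : seq bool) : Prop :=
  exists w : Z, forall t : nat, exists a : Z, forall i : Z,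
    iter t (eca N) (periodic u) i <> iter t (eca N) (patch u x) i ->
    (a <= i /\ i < a + w)%Z.

Inductive protocol (X Y : Type) : Type :=
| Leaf : bool -> protocol X Y
| AliceNode : (X -> bool) -> protocol X Y -> protocol X Y -> protocol X Y
| BobNode : (Y -> bool) -> protocol X Y -> protocol X Y -> protocol X Y.

Fixpoint run (X Y : Type) (p : protocol X Y) (x : X) (y : Y) : bool :=
  match p with
  | Leaf b => b
  | AliceNode f l r => if f x then run l x y else run r x y
  | BobNode g l r => if g y then run l x y else run r x y
  end.

Fixpoint depth (X Y : Type) (p : protocol X Y) : nat :=
  match p with
  | Leaf _ => 0
  | AliceNode _ l r => (maxn (depth l) (depth r)).+1
  | BobNode _ l r => (maxn (depth l) (depth r)).+1
  end.

Definition computes (X Y : Type) (p : protocol X Y) (P : X -> Y -> Prop) : Prop :=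
  forall x y, run p x y = true <-> P x y.

Definition CC_le (X Y : Type) (P : X -> Y -> Prop) (C : nat) : Prop :=
  exists p : protocol X Y, depth p <= C /\ computes p P.

(* D(SInv_{F,u} on {0,1}^n) <= C : for every split point 0 <= i < n,
   the function g_i(x,y) = SInv(xy) on {0,1}^i x {0,1}^(n-i) has D(g_i) <= C. *)
Definition SInv_CC_le (N : Z) (u : seq bool) (n C : nat) : Prop :=
  forall i : nat, i < n ->
    CC_le (fun (x : i.-tuple bool) (y : (n - i).-tuple bool) =>
             SInv N u (tval x ++ tval y)) C.

(* Main.v *)
Require Import Defs.
From Stdlib Require Import ZArith.
From mathcomp Require Import all_boot.
From Stdlib Require Import Lia Classical FunctionalExtensionality.
From mathcomp Require Import zify.

Section Work.

Local Open Scope Z_scope.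

Definition rule (a b c : bool) := (b && ~~ a) || (a && ~~ b && c).
Notation E := (eca 44%Z).

Lemma ecaE (c : config) i : E c i = rule (c (i-1)) (c i) (c (i+1)).
Proof.
rewrite /eca /rule; case: (c (i-1)); case: (c i); case: (c (i+1)); reflexivity.
Qed.

Lemma ecaAt (c : config) i p q : p = i - 1 -> q = i + 1 ->
  E c i = rule (c p) (c i) (c q).
Proof. by move=> -> ->; apply: ecaE. Qed.

Definition good3 (a b c : bool) :=
  [|| (a && b && ~~ c), (a && ~~ b && c) | (~~ a && b && c)].
Definition Good (c : config) := forall i, good3 (c i) (c (i+1)) (c (i+2)).

Lemma good_shift c : Good c -> forall i, E c i = c (i+1).
Proof.
move=> H i; rewrite ecaE; have := H (i-1).
rewrite (_ : i - 1 + 1 = i); last lia. rewrite (_ : i - 1 + 2 = i + 1); last lia.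
rewrite /good3 /rule; case: (c (i-1)); case: (c i); case: (c (i+1)) => //.
Qed.

Lemma good_step c : Good c -> Good (E c).
Proof.
move=> H i; rewrite !good_shift //.
have := H (i+1).
by replace (i + 1 + 1) with (i + 2) by lia; replace (i + 1 + 2) with (i + 2 + 1) by lia.
Qed.

Lemma good_iter t c : Good c -> Good (iter t E c).
Proof. move=> H; elim: t => [|t IH] //=; exact: good_step. Qed.

Lemma good_nowall c j : Good c -> ~ (c j = false /\ c (j+1) = false).
Proof. move=> H [h1 h2]; have := H j; by rewrite h1 h2. Qed.

Lemma wall_step (c : config) j : c j = false -> c (j+1) = false ->
  E c j = false /\ E c (j+1) = false.
Proof.
move=> h1 h2; rewrite (ecaE c j) (ecaAt c (j+1) j (j+2)); try lia.
rewrite h1 h2 /rule; case: (c (j-1)); case: (c (j+2)); by [].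
Qed.

Lemma wall_iter (c : config) t0 j : iter t0 E c j = false -> iter t0 E c (j+1) = false ->
  forall s, (t0 <= s)%N -> iter s E c j = false /\ iter s E c (j+1) = false.
Proof.
move=> h1 h2 s hs; rewrite -(subnK hs); elim: (s - t0)%N => [|m [IH1 IH2]].
  by rewrite add0n.
by rewrite addSn /=; apply: wall_step.
Qed.

Lemma local t (c d : config) i :
  (forall j, i - Z.of_nat t <= j <= i + Z.of_nat t -> c j = d j) ->
  iter t E c i = iter t E d i.
Proof.
elim: t i => [|t IH] i H /=.
  by apply: H; lia.
rewrite !ecaE (IH (i-1)) ?(IH i) ?(IH (i+1)) //; move=> j hj; apply: H; lia.
Qed.

Lemma bad_wall (c : config) i : ~~ good3 (c i) (c (i+1)) (c (i+2)) ->
  exists t j, iter t E c j = false /\ iter t E c (j+1) = false.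
Proof.
have e1 : E c (i+1) = rule (c i) (c (i+1)) (c (i+2)) by apply: ecaAt; lia.
have e2 : E c (i+2) = rule (c (i+1)) (c (i+2)) (c (i+3)) by apply: ecaAt; lia.
have e0 : E c i = rule (c (i-1)) (c i) (c (i+1)) by apply: ecaE.
have f1 : E (E c) (i+1) = rule (E c i) (E c (i+1)) (E c (i+2)) by apply: ecaAt; lia.
have f2 : E (E c) (i+2) = rule (E c (i+1)) (E c (i+2)) (E c (i+3)) by apply: ecaAt; lia.
have q1 : i + 1 + 1 = i + 2 by lia.
have q2 : i + 2 + 1 = i + 3 by lia.
have q3 : i - 1 + 1 = i by lia.
case B0: (c i); case B1: (c (i+1)); case B2: (c (i+2)) => //= _.
- exists 1%N, (i+1); rewrite /= q1 e1 e2 B0 B1 B2 /rule; by case: (c (i+3)).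
- exists 0%N, (i+1); by rewrite /= q1 B1 B2.
- case A: (c (i-1)).
    case D: (c (i+3)).
      exists 2%N, (i+1); rewrite /= q1 f1 f2 e0 e1 e2 A B0 B1 B2 D /rule /=.
      by case: (E c (i+3)).
    exists 0%N, (i+2); by rewrite /= q2 B2 D.
  exists 0%N, (i-1); by rewrite /= q3 A B0.
- exists 0%N, i; by rewrite /= B0 B1.
- exists 0%N, i; by rewrite /= B0 B1.
Qed.



Definition Per (P : Z) (c : config) := forall i k, c (i + k * P) = c i.

Lemma per0 u : u <> [::] -> Per (Z.of_nat (size u)) (periodic u).
Proof.
move=> hu i k; rewrite /periodic Z.mod_add //.
by case: u hu.
Qed.

Lemma per_step P c : Per P c -> Per P (E c).
Proof.
move=> H i k; rewrite !ecaE.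
replace (i + k * P - 1) with ((i - 1) + k * P) by lia.
replace (i + k * P + 1) with ((i + 1) + k * P) by lia.
by rewrite !H.
Qed.

Lemma per_iter P c t : Per P c -> Per P (iter t E c).
Proof. move=> H; elim: t => [|t IH] //=; exact: per_step. Qed.

Lemma patch_out u x j : (j < 0 \/ Z.of_nat (size x) <= j) -> patch u x j = periodic u j.
Proof.
move=> h; rewrite /patch.
by destruct (Z.leb_spec 0 j), (Z.ltb_spec j (Z.of_nat (size x))); try lia.
Qed.

Lemma out_iter u x t i :
  (i + Z.of_nat t < 0 \/ Z.of_nat (size x) <= i - Z.of_nat t) ->
  iter t E (patch u x) i = iter t E (periodic u) i.
Proof. move=> h; apply: local => j hj; apply: patch_out; lia. Qed.

Lemma caseA u T j : u <> [::] ->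
  iter T E (periodic u) j = false -> iter T E (periodic u) (j+1) = false ->
  forall x, SInv 44 u x.
Proof.
move=> hu h1 h2 x.
set P := Z.of_nat (size u).
have hP : 1 <= P.
  have : (0 < size u)%N by move: hu; case: (u).
  rewrite /P; lia.
set n := Z.of_nat (size x).
set kL := - (Z.abs j + Z.of_nat T + 2).
set kR := Z.abs j + n + Z.of_nat T.
set qL := j + kL * P.
set qR := j + kR * P.
have hL : qL <= - Z.of_nat T - 2.
  have : kL * P <= kL * 1 by apply: Z.mul_le_mono_nonpos_l; rewrite /kL; lia.
  rewrite /qL /kL; lia.
have hR : n + Z.of_nat T <= qR.
  have : kR * 1 <= kR * P by apply: Z.mul_le_mono_nonneg_l; rewrite /kR; lia.
  rewrite /qR /kR; lia.
set B := periodic u. set c := patch u x.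
have perB : Per P (iter T E B) by apply: per_iter; apply: per0.
have wB : forall q k, q = j + k * P -> iter T E B q = false /\ iter T E B (q+1) = false.
  move=> q k ->; split; first by rewrite perB.
  by replace (j + k * P + 1) with ((j+1) + k * P) by lia; rewrite perB.
have [wBL1 wBL2] := wB qL kL erefl.
have [wBR1 wBR2] := wB qR kR erefl.
have oc : forall i, (i <= qL + 1 \/ qR <= i) -> iter T E c i = iter T E B i.
  move=> i hi; apply: out_iter; lia.
have cL1 : iter T E c qL = false by rewrite oc //; lia.
have cL2 : iter T E c (qL+1) = false by rewrite oc //; lia.
have cR1 : iter T E c qR = false by rewrite oc //; lia.
have cR2 : iter T E c (qR+1) = false by rewrite oc //; lia.
have wcL := @wall_iter c T qL cL1 cL2.
have wcR := @wall_iter c T qR cR1 cR2.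
have wbL := @wall_iter B T qL wBL1 wBL2.
have wbR := @wall_iter B T qR wBR1 wBR2.
clear wB perB; clearbody qL qR; clear kL kR.
have claim : forall m, forall i, (i <= qL + 1 \/ qR <= i) ->
    iter (m + T) E c i = iter (m + T) E B i.
  elim=> [|m IH] i hi; first by rewrite add0n; apply: oc.
  have hs : (T <= m.+1 + T)%N by rewrite leq_addl.
  have [a1 a2] := wcL _ hs; have [a3 a4] := wcR _ hs.
  have [b1 b2] := wbL _ hs; have [b3 b4] := wbR _ hs.
  have [hq|[hq|[hq|[hq|hq]]]] : i <= qL - 1 \/ i = qL \/ i = qL + 1 \/ (i = qR \/ i = qR + 1)
      \/ qR + 2 <= i by clear -hi; lia.
  - rewrite addSn !iterS !ecaE !IH //; clear -hq; lia.
  - by subst i; rewrite a1 b1.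
  - by subst i; rewrite a2 b2.
  - by case: hq => ->; [rewrite a3 b3 | rewrite a4 b4].
  - rewrite addSn !iterS !ecaE !IH //; clear -hq; lia.
exists (qR - qL + 1) => t; exists qL => i hd.
case: (leqP T t) => hT.
  rewrite -(subnK hT) in hd.
  have : ~ (i <= qL + 1 \/ qR <= i) by move=> h; apply: hd; rewrite claim.
  clear -hL hR; lia.
have hT' : (Z.of_nat t < Z.of_nat T) by apply/Nat2Z.inj_lt/ltP.
have hd' : ~ (i + Z.of_nat t < 0 \/ n <= i - Z.of_nat t).
  by move=> h; apply: hd; symmetry; exact: (out_iter u x t i h).
clear -hd' hT' hL hR; lia.
Qed.



Lemma good3_det a a' b d : good3 a b d -> good3 a' b d -> a = a'.
Proof. by case: a; case: a'; case: b; case: d. Qed.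

Lemma good_uniq (c d : config) n : Good c -> Good d ->
  (forall i, n <= i -> c i = d i) -> forall i, c i = d i.
Proof.
move=> Hc Hd H.
have K : forall m : nat, forall i, n - Z.of_nat m <= i -> c i = d i.
  elim=> [|m IH] i hi; first by apply: H; lia.
  have [h|h] : n - Z.of_nat m <= i \/ i = n - Z.of_nat m - 1 by clear -hi; lia.
    by apply: IH.
  apply: good3_det (Hc i) _.
  rewrite (IH (i+1)) ?(IH (i+2)); try (clear -h; lia).
  exact: Hd.
move=> i; apply: (K (Z.to_nat (n - i))); lia.
Qed.

Lemma rightmost (P : Z -> Prop) k M : P k -> (forall i, M <= i -> ~ P i) ->
  exists r, P r /\ forall i, r < i -> ~ P i.
Proof.
move=> hk hM.
have K : forall m : nat, forall k, M - k <= Z.of_nat m -> P k ->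
    exists r, P r /\ forall i, r < i -> ~ P i.
  elim=> [|m IH] k0 hm hp.
    by exfalso; apply: (hM k0) => //; lia.
  case: (classic (exists i, k0 < i /\ P i)) => [[i [hi hpi]]|hn].
    apply: (IH i) => //.
    have : i < M by case: (Z.lt_ge_cases i M) => // h; exfalso; exact: (hM i h hpi).
    lia.
  exists k0; split => // i hi hpi; apply: hn; by exists i.
apply: (K (Z.to_nat (M - k)) k) => //; lia.
Qed.

Lemma rule_diff a a' e b d : a <> a' -> good3 e b d -> rule a b d <> rule a' b d.
Proof. by case: a; case: a'; case: b; case: d; case: e. Qed.

Definition Match (u s : seq bool) :=
  forall k : nat, (k < size s)%N -> nth false s k = periodic u (Z.of_nat k).

Lemma caseB u s : Good (periodic u) -> SInv 44 u s <-> Match u s.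
Proof.
move=> HB; split; last first.
  move=> HM; have Heq : patch u s = periodic u.
    apply: functional_extensionality => i; rewrite /patch.
    case: (Z.leb_spec 0 i) => h1; case: (Z.ltb_spec i (Z.of_nat (size s))) => h2 //=.
    rewrite HM; last by apply/ltP; lia.
    by rewrite Z2Nat.id.
  by exists 0 => t; exists 0 => i; rewrite Heq.
move=> HS; apply: NNPP => HM.
set B := periodic u; set c := patch u s; set n := Z.of_nat (size s).
have [k hk] : exists k, c k <> B k.
  apply: NNPP => hn; apply: HM => k hks.
  have := (fun h => hn (ex_intro _ (Z.of_nat k) h)).
  rewrite /c /B /patch.
  have hk : (Z.of_nat k < Z.of_nat (size s)) by apply/Nat2Z.inj_lt/ltP.
  case: (Z.leb_spec 0 (Z.of_nat k)) => h1; last lia.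
  case: (Z.ltb_spec (Z.of_nat k) (Z.of_nat (size s))) => h2; last lia.
  rewrite /= Nat2Z.id => h; by apply: NNPP.
have outc : forall i, (i < 0 \/ n <= i) -> c i = B i by move=> i h; apply: patch_out.
have [r [hr hr']] : exists r, c r <> B r /\ forall i, r < i -> ~ (c i <> B i).
  apply: (@rightmost (fun i => c i <> B i) k n hk) => i hi; apply; apply: outc; lia.
have goodB : forall t, Good (iter t E B) := fun t => @good_iter t B HB.
have RE : forall t : nat, iter t E c (r + Z.of_nat t) <> iter t E B (r + Z.of_nat t) /\
    forall i, r + Z.of_nat t < i -> iter t E c i = iter t E B i.
  elim=> [|t [IH1 IH2]].
    split; first by rewrite Z.add_0_r.
    by move=> i hi; apply: NNPP; apply: hr'; lia.
  split.
    rewrite !iterS.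
    rewrite (ecaAt _ _ (r + Z.of_nat t) (r + Z.of_nat t + 2)); try lia.
    rewrite (ecaAt (iter t E B) _ (r + Z.of_nat t) (r + Z.of_nat t + 2)); try lia.
    replace (r + Z.of_nat t.+1) with (r + Z.of_nat t + 1) by lia.
    rewrite (IH2 (r + Z.of_nat t + 1)); last lia.
    rewrite (IH2 (r + Z.of_nat t + 2)); last lia.
    exact: (@rule_diff _ _ _ _ _ IH1 (goodB t (r + Z.of_nat t))).
  move=> i hi; rewrite !iterS !ecaE !IH2 //; lia.
case: (classic (Good c)) => Hc.
  by apply: hk; apply: (@good_uniq c B n Hc HB) => i hi; apply: outc; lia.
have [i hi] : exists i, ~~ good3 (c i) (c (i+1)) (c (i+2)).
  apply: NNPP => hn; apply: Hc => i; apply: NNPP => h; apply: hn; exists i; exact/negP.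
have [t0 [j [w1 w2]]] := @bad_wall c i hi.
have W := @wall_iter c t0 j w1 w2.
have [w HS'] := HS.
set t := (t0 + Z.to_nat (w + Z.abs j + Z.abs r + 2))%N.
have [a Ha] := HS' t.
have [RE1 _] := RE t.
have h1 := Ha _ (fun e => RE1 (esym e)).
have [W1 W2] := W t (leq_addr _ _).
have h2 : a <= j + 1.
  case: (boolP (iter t E B j)) => hb.
    have := Ha j; rewrite W1 hb => h; have h3 := h (fun e => ltac:(discriminate)); clear -h3; lia.
  case: (boolP (iter t E B (j+1))) => hb'.
    have := Ha (j+1); rewrite W2 hb' => h; have h3 := h (fun e => ltac:(discriminate)); clear -h3; lia.
  exfalso; apply: (@good_nowall (iter t E B) j (goodB t)); split; exact/negbTE.
have : Z.of_nat t = Z.of_nat t0 + Z.of_nat (Z.to_nat (w + Z.abs j + Z.abs r + 2)).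
  by rewrite /t Nat2Z.inj_add.
clear -h1 h2; lia.
Qed.
End Work.
Local Close Scope Z_scope.

Lemma match_cat u (n i : nat) (x : i.-tuple bool) (y : (n - i).-tuple bool) :
  Match u (tval x ++ tval y) <->
  [forall k : 'I_i, nth false x k == periodic u (Z.of_nat k)] &&
  [forall k : 'I_(n - i), nth false y k == periodic u (Z.of_nat (i + k))].
Proof.
split.
  move=> HM; apply/andP; split; apply/forallP => k; apply/eqP.
    have := HM k; rewrite size_cat !size_tuple nth_cat size_tuple ltn_ord; apply.
    by rewrite (leq_trans (ltn_ord k)) ?leq_addr.
  have := HM (i + k)%N; rewrite size_cat !size_tuple nth_cat size_tuple.
  have -> : (i + k < i)%N = false by rewrite ltnNge leq_addr.
  rewrite addKn; apply.
  by rewrite ltn_add2l ltn_ord.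
move=> /andP [/forallP HA /forallP HB]; rewrite /Match => k; rewrite size_cat !size_tuple => hk.
rewrite nth_cat size_tuple.
case: (ltnP k i) => hki.
  by have := HA (Ordinal hki) => /eqP.
have hk' : (k - i < n - i)%N by lia.
by have := HB (Ordinal hk') => /eqP /= ->; rewrite subnKC.
Qed.

Theorem mainTheorem13 :
  forall u : seq bool, u <> [::] ->
  exists C : nat, forall n : nat, SInv_CC_le 44%Z u n C.
Proof.
move=> u hu; exists 2%N => n i hi.
case: (classic (Good (periodic u))) => HG.
  exists (AliceNode (fun x : i.-tuple bool =>
            [forall k : 'I_i, nth false x k == periodic u (Z.of_nat k)])
          (BobNode (fun y : (n - i).-tuple bool =>
            [forall k : 'I_(n - i), nth false y k == periodic u (Z.of_nat (i + k))])
            (Leaf _ _ true) (Leaf _ _ false)) (Leaf _ _ false)).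
  split => // x y; rewrite caseB // match_cat /=.
  by case: [forall k : 'I_i, _]; case: [forall k : 'I_(n - i), _].
have [j hj] : exists j, ~~ good3 (periodic u j) (periodic u (j+1)%Z) (periodic u (j+2)%Z).
  apply: NNPP => hn; apply: HG => j; apply: NNPP => h; apply: hn; exists j; exact/negP.
have [T [q [w1 w2]]] := @bad_wall (periodic u) j hj.
exists (Leaf _ _ true); split => // x y; split => // _.
exact: (@caseA u T q hu w1 w2).
Qed.
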